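(* Let $G$ and $H$ be connected graphs. If $\mu_t(G)=|\mathcal{S}(G)|$ or $\mu_t(H)=|\mathcal{S}(H)|$, then $$\mu_t(G\,\Box\,H)\le \mu_t(G)\,\mu_t(H).$$
   Context: All graphs are finite, simple and undirected. The Cartesian product $G\,\Box\,H$ has vertex set $V(G)\times V(H)$, with $(x,y)$ adjacent to $(x',y')$ iff either $x=x'$ and $yy'\in E(H)$, or $xx'\in E(G)$ and $y=y'$. Let $F$ be a connected graph and $X\subseteq V(F)$. Two vertices $x,y\in V(F)$ are $X$-visible if there exists a shortest $x,y$-path in $F$ none of whose internal vertices belongs to $X$. $X$ is a total mutual-visibility set of $F$ if every two vertices of $F$ are $X$-visible (the empty set is allowed). $\mu_t(F)$ is the maximum cardinality of a total mutual-visibility set of $F$. A vertex is simplicial if its neighbors induce a complete graph; $\mathcal{S}(F)$ is the set of simplicial vertices of $F$. *)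

(* Defs.v *)
(* Finite simple graphs as symmetric irreflexive relations on a finType. *)
From mathcomp Require Import all_boot.
From mathcomp Require Import boolp.
Set Implicit Arguments. Unset Strict Implicit. Unset Printing Implicit Defensive.

Section Graphs.
Variable T : finType.
Variable e : rel T.

Definition simple_graph : Prop := symmetric e /\ irreflexive e.

Definition connected_graph : Prop :=
  0 < #|T| /\ forall x y : T, connect e x y.

(* A walk from x to y is encoded as x :: p with path e x p and last x p = y;
   its length is size p. *)
Definition xy_walk (x y : T) (p : seq T) : bool := path e x p && (last x p == y).

Definition shortest_path (x y : T) (p : seq T) : Prop :=
  xy_walk x y p /\ forall q, xy_walk x y q -> size p <= size q.

(* internal vertices of the walk x :: p (all vertices except the two ends) *)
Definition internal (x : T) (p : seq T) : seq T := behead (belast x p).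

Definition X_visible (X : {set T}) (x y : T) : Prop :=
  exists p, shortest_path x y p /\ all (fun v => v \notin X) (internal x p).

Definition total_mutual_visibility (X : {set T}) : Prop :=
  forall x y : T, X_visible X x y.

Definition tmvb (X : {set T}) : bool := `[< total_mutual_visibility X >].

Definition mu_t : nat := \max_(X : {set T} | tmvb X) #|X|.

Definition simplicial (v : T) : bool :=
  [forall a, forall b, (e v a && e v b && (a != b)) ==> e a b].

Definition simplicial_set : {set T} := [set v | simplicial v].
End Graphs.

Definition cart_prod (T U : finType) (e : rel T) (f : rel U) : rel (T * U) :=
  fun a b => ((a.1 == b.1) && f a.2 b.2) || (e a.1 b.1 && (a.2 == b.2)).

(* Main.v *)
Require Import Defs.
From mathcomp Require Import all_boot.
From mathcomp Require Import boolp.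
Set Implicit Arguments. Unset Strict Implicit. Unset Printing Implicit Defensive.

Lemma internal_split (T : eqType) (v x : T) (p : seq T) :
  v \in behead (belast x p) -> exists p1 b p2, p = p1 ++ v :: b :: p2.
Proof.
elim: p x => [|c p IH] x //=.
case: p IH => [|d p''] IH //=.
rewrite inE => /orP [/eqP ->|H]; first by exists [::], d, p''.
have [p1 [b [p2 E]]] := IH c H.
by exists (c :: p1), b, p2; rewrite E.
Qed.

Section S1.
Variable T : finType.
Variable e : rel T.
Hypothesis esym : symmetric e.

Lemma simplicial_not_internal x y p v :
  shortest_path e x y p -> v \in internal x p -> ~~ simplicial e v.
Proof.
move=> [Hw Hmin] /internal_split [p1 [b [p2 E]]].
apply/negP => Hs.
move: Hw; rewrite /xy_walk E cat_path last_cat /= => /andP [/and4P [Hp1 Hav Hvb Hp2] Hl].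
set a := last x p1 in Hav Hl Hp2 *.
have [Eab|Nab] := eqVneq a b.
- have := Hmin (p1 ++ p2).
  rewrite /xy_walk cat_path last_cat Hp1 -/a Eab Hp2 Hl E !size_cat /= => /(_ isT).
  by rewrite leq_add2l ltnNge leqnSn.
- have Hab : e a b.
    move: Hs; rewrite /simplicial => /forallP /(_ a) /forallP /(_ b).
    by rewrite esym Hav Hvb Nab.
  have := Hmin (p1 ++ b :: p2).
  rewrite /xy_walk cat_path last_cat Hp1 -/a /= Hab Hp2 Hl E !size_cat /= => /(_ isT).
  by rewrite leq_add2l ltnn.
Qed.

Lemma tmv_union_simp X :
  total_mutual_visibility e X -> total_mutual_visibility e (X :|: simplicial_set e).
Proof.
move=> H x y; have [p [Hsp Hall]] := H x y.
exists p; split => //; apply/allP => v Hv.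
rewrite in_setU in_set negb_or (allP Hall v Hv) /=.
exact: simplicial_not_internal Hsp Hv.
Qed.

Lemma tmv_le_mu X : total_mutual_visibility e X -> #|X| <= mu_t e.
Proof. by move=> H; apply: (@leq_bigmax_cond _ (tmvb e)); apply/asboolP. Qed.

Lemma tmv_sub_simp X : mu_t e = #|simplicial_set e| ->
  total_mutual_visibility e X -> X \subset simplicial_set e.
Proof.
move=> Hmu H.
have H1 := tmv_le_mu (tmv_union_simp H).
have : simplicial_set e == X :|: simplicial_set e.
  by rewrite eqEcard subsetUr -Hmu H1.
by move/eqP => ->; rewrite subsetUl.
Qed.
End S1.

Section Prod.
Variables (T U : finType) (e : rel T) (f : rel U).
Let E := cart_prod e f.

Fixpoint projG (a : T * U) (p : seq (T * U)) : seq T :=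
  if p is b :: p' then (if a.1 == b.1 then projG b p' else b.1 :: projG b p') else [::].
Fixpoint projH (a : T * U) (p : seq (T * U)) : seq U :=
  if p is b :: p' then (if a.2 == b.2 then projH b p' else b.2 :: projH b p') else [::].

Lemma projG_walk a p : path E a p ->
  path e a.1 (projG a p) /\ last a.1 (projG a p) = (last a p).1.
Proof.
elim: p a => [|b p IH] a //= /andP [Hab Hp].
have [Hp1 Hl] := IH b Hp.
case: (eqVneq a.1 b.1) => [->|N] //=.
split=> //; rewrite Hp1 andbT.
by move: Hab; rewrite /E /cart_prod (negbTE N) /= => /andP [].
Qed.

Lemma projH_walk a p : path E a p ->
  path f a.2 (projH a p) /\ last a.2 (projH a p) = (last a p).2.
Proof.
elim: p a => [|b p IH] a //= /andP [Hab Hp].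
have [Hp1 Hl] := IH b Hp.
case: (eqVneq a.2 b.2) => [->|N] //=.
split=> //; rewrite Hp1 andbT.
by move: Hab; rewrite /E /cart_prod (negbTE N) andbF orbF => /andP [].
Qed.

Lemma projG_size a p : size (projG a p) <= size p.
Proof. by elim: p a => [|b p IH] a //=; case: eqP => _ /=; [apply: leqW|]; apply: IH. Qed.
Lemma projH_size a p : size (projH a p) <= size p.
Proof. by elim: p a => [|b p IH] a //=; case: eqP => _ /=; [apply: leqW|]; apply: IH. Qed.

Lemma projG_eq a p : path E a p -> size (projG a p) = size p ->
  projG a p = map fst p /\ all (fun b => b.2 == a.2) p.
Proof.
elim: p a => [|b p IH] a //= /andP [Hab Hp].
case: (eqVneq a.1 b.1) => [_|N] /=.
  by move=> Hs; have := projG_size b p; rewrite Hs ltnn.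
move=> [] /(IH _ Hp) [-> Hall]; split=> //.
move: Hab; rewrite /E /cart_prod (negbTE N) /= => /andP [_ /eqP Hb].
by rewrite Hb eqxx Hall.
Qed.

Lemma projH_eq a p : path E a p -> size (projH a p) = size p ->
  projH a p = map snd p /\ all (fun b => b.1 == a.1) p.
Proof.
elim: p a => [|b p IH] a //= /andP [Hab Hp].
case: (eqVneq a.2 b.2) => [_|N] /=.
  by move=> Hs; have := projH_size b p; rewrite Hs ltnn.
move=> [] /(IH _ Hp) [-> Hall]; split=> //.
move: Hab; rewrite /E /cart_prod (negbTE N) andbF orbF => /andP [/eqP Hb _].
by rewrite Hb eqxx Hall.
Qed.

Lemma liftG h x r : path e x r ->
  path E (x, h) (map (fun g => (g, h)) r) /\ last (x,h) (map (fun g => (g, h)) r) = (last x r, h).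
Proof.
elim: r x => [|c r IH] x //= /andP [Hxc Hr].
have [-> ->] := IH c Hr; split=> //.
by rewrite /E /cart_prod /= Hxc eqxx orbT.
Qed.

Lemma liftH g x r : path f x r ->
  path E (g, x) (map (fun h => (g, h)) r) /\ last (g,x) (map (fun h => (g, h)) r) = (g, last x r).
Proof.
elim: r x => [|c r IH] x //= /andP [Hxc Hr].
have [-> ->] := IH c Hr; split=> //.
by rewrite /E /cart_prod /= Hxc eqxx.
Qed.

Lemma fiberG X h : total_mutual_visibility E X ->
  total_mutual_visibility e [set g | (g, h) \in X].
Proof.
move=> H x y; have [p [[Hw Hmin] Hall]] := H (x, h) (y, h).
move: Hw; rewrite /xy_walk => /andP [Hp /eqP Hl].
have [Hq Hql] := projG_walk Hp.
set q := projG (x, h) p in Hq Hql.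
have Hqw : xy_walk e x y q by rewrite /xy_walk Hq Hql Hl eqxx.
have Hlift : forall r, xy_walk e x y r -> size p <= size r.
  move=> r /andP [Hr /eqP Hrl]; have [Hr1 Hr2] := liftG h Hr.
  have := Hmin (map (fun g => (g, h)) r); rewrite size_map; apply.
  by rewrite /xy_walk Hr1 Hr2 Hrl eqxx.
have Hsz : size q = size p.
  by apply/eqP; rewrite eqn_leq projG_size Hlift.
have [Hqe Hal] := projG_eq Hp Hsz.
exists q; split.
  by split=> // r Hr; rewrite Hsz; apply: Hlift.
rewrite /internal (_ : q = map fst p) // -[x]/((x, h).1) belast_map behead_map all_map.
apply/allP => c Hc /=; rewrite in_set.
have Hc2 : c.2 == h.
  move: (mem_belast (mem_behead Hc)); rewrite inE => /orP [/eqP -> //|Hc'].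
  exact: (allP Hal c Hc').
by rewrite -(eqP Hc2) -surjective_pairing (allP Hall c Hc).
Qed.

Lemma fiberH X g : total_mutual_visibility E X ->
  total_mutual_visibility f [set h | (g, h) \in X].
Proof.
move=> H x y; have [p [[Hw Hmin] Hall]] := H (g, x) (g, y).
move: Hw; rewrite /xy_walk => /andP [Hp /eqP Hl].
have [Hq Hql] := projH_walk Hp.
set q := projH (g, x) p in Hq Hql.
have Hqw : xy_walk f x y q by rewrite /xy_walk Hq Hql Hl eqxx.
have Hlift : forall r, xy_walk f x y r -> size p <= size r.
  move=> r /andP [Hr /eqP Hrl]; have [Hr1 Hr2] := liftH g Hr.
  have := Hmin (map (fun h => (g, h)) r); rewrite size_map; apply.
  by rewrite /xy_walk Hr1 Hr2 Hrl eqxx.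
have Hsz : size q = size p.
  by apply/eqP; rewrite eqn_leq projH_size Hlift.
have [Hqe Hal] := projH_eq Hp Hsz.
exists q; split.
  by split=> // r Hr; rewrite Hsz; apply: Hlift.
rewrite /internal (_ : q = map snd p) // -[x]/((g, x).2) belast_map behead_map all_map.
apply/allP => c Hc /=; rewrite in_set.
have Hc2 : c.1 == g.
  move: (mem_belast (mem_behead Hc)); rewrite inE => /orP [/eqP -> //|Hc'].
  exact: (allP Hal c Hc').
by rewrite -(eqP Hc2) -surjective_pairing (allP Hall c Hc).
Qed.
End Prod.

Lemma card_pair0 (T U : finType) (X : {set T * U}) :
  #|X| = \sum_(g : T) \sum_(h : U) (if (g, h) \in X then 1 else 0).
Proof.
rewrite pair_bigA -sum1_card big_mkcond /=.
by apply: eq_bigr => -[g h] _.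
Qed.

Lemma card_pairG (T U : finType) (X : {set T * U}) :
  #|X| = \sum_(g : T) #|[set h | (g, h) \in X]|.
Proof.
rewrite (card_pair0 X); apply: eq_bigr => g _; rewrite -sum1_card [in RHS]big_mkcond /=.
by apply: eq_bigr => h _; rewrite in_set.
Qed.

Lemma card_pairH (T U : finType) (X : {set T * U}) :
  #|X| = \sum_(h : U) #|[set g | (g, h) \in X]|.
Proof.
rewrite (card_pair0 X) exchange_big /=; apply: eq_bigr => h _; rewrite -sum1_card [in RHS]big_mkcond /=.
by apply: eq_bigr => g _; rewrite in_set.
Qed.

Section Main.
Variables (T U : finType) (e : rel T) (f : rel U).

Lemma boundG : symmetric e -> mu_t e = #|simplicial_set e| ->
  forall X, total_mutual_visibility (cart_prod e f) X -> #|X| <= mu_t e * mu_t f.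
Proof.
move=> Hs Hmu X HX.
rewrite card_pairG (bigID (fun g => g \in simplicial_set e)) /=.
rewrite [X in _ + X]big1 ?addn0; last first.
  move=> g Hg; apply/eqP; rewrite cards_eq0; apply/eqP/setP => h.
  rewrite !inE; apply/negP => Hgh.
  have := subsetP (tmv_sub_simp Hs Hmu (fiberG h HX)) g.
  by rewrite in_set Hgh => /(_ isT); apply/negP.
rewrite Hmu mulnC -sum1_card big_distrr /= muln1.
apply: leq_sum => g _; apply: tmv_le_mu; exact: fiberH.
Qed.

Lemma boundH : symmetric f -> mu_t f = #|simplicial_set f| ->
  forall X, total_mutual_visibility (cart_prod e f) X -> #|X| <= mu_t e * mu_t f.
Proof.
move=> Hs Hmu X HX.
rewrite card_pairH (bigID (fun h => h \in simplicial_set f)) /=.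
rewrite [X in _ + X]big1 ?addn0; last first.
  move=> h Hh; apply/eqP; rewrite cards_eq0; apply/eqP/setP => g.
  rewrite !inE; apply/negP => Hgh.
  have := subsetP (tmv_sub_simp Hs Hmu (fiberH g HX)) h.
  by rewrite in_set Hgh => /(_ isT); apply/negP.
rewrite Hmu -sum1_card big_distrr /= muln1.
apply: leq_sum => h _; apply: tmv_le_mu; exact: fiberG.
Qed.
End Main.

Unset Implicit Arguments.
Theorem theorem5p4 (T U : finType) (e : rel T) (f : rel U) :
  simple_graph e -> connected_graph e ->
  simple_graph f -> connected_graph f ->
  (mu_t e = #|simplicial_set e| \/ mu_t f = #|simplicial_set f|) ->
  mu_t (cart_prod e f) <= mu_t e * mu_t f.
Proof.
move=> [se _] _ [sf _] _ H.
apply/bigmax_leqP => X /asboolP HX.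
by case: H => H; [apply: boundG | apply: boundH].
Qed.
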